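(* Let $B=B(x^{(0)};R)\subset\mathbb R^n$, let $x^{(1)},\dots,x^{(n+1)}\in B$ be the vertices of a nondegenerate simplex $S$ with basic Lagrange polynomials $\lambda_j(x)=\sum_{i=1}^n l_{ij}x_i+l_{n+1,j}$, and let $P:C(B)\to\Pi_1(\mathbb R^n)$ be the interpolation projector with nodes $x^{(j)}$. Then $$\|P\|_B=\max_{f_j=\pm1}\Big[R\Big(\sum_{i=1}^n\Big(\sum_{j=1}^{n+1}f_jl_{ij}\Big)^2\Big)^{1/2}+\Big|\sum_{j=1}^{n+1}f_j\lambda_j(x^{(0)})\Big|\Big],$$ where the maximum is over all $(f_1,\dots,f_{n+1})\in\{-1,1\}^{n+1}$. In particular, if the center of gravity of $S$ coincides with $x^{(0)}$, then $\|P\|_B=\max_{f_j=\pm1}\big[R(\sum_{i=1}^n(\sum_{j=1}^{n+1}f_jl_{ij})^2)^{1/2}+\frac1{n+1}|\sum_{j=1}^{n+1}f_j|\big]$.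
   Context: $B(x^{(0)};R)$ is the closed Euclidean ball of center $x^{(0)}$ and radius $R$. $C(\Omega)$ is the space of continuous real functions on $\Omega$ with the sup norm; $\Pi_1(\mathbb R^n)$ is the space of polynomials of degree $\le1$ in $n$ variables. The interpolation projector $P$ with nodes $x^{(j)}$ is defined by $Pf\in\Pi_1(\mathbb R^n)$, $Pf(x^{(j)})=f(x^{(j)})$, i.e. $Pf=\sum_j f(x^{(j)})\lambda_j$; $\|P\|_B$ is its operator norm on $C(B)$. The vertex matrix $A$ of $S$ has rows $(x^{(j)}_1,\dots,x^{(j)}_n,1)$, $A^{-1}=(l_{ij})$, and $\lambda_j(x)=\sum_i l_{ij}x_i+l_{n+1,j}$. *)

(* Defs.v *)
From HB Require Import structures.
From mathcomp Require Import all_boot all_order all_algebra.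
From mathcomp Require Import all_classical all_reals all_analysis.
Set Implicit Arguments. Unset Strict Implicit. Unset Printing Implicit Defensive.
Import Order.TTheory GRing.Theory Num.Theory.
Import numFieldNormedType.Exports.
Local Open Scope classical_set_scope.
Local Open Scope ring_scope.

Section Defs.
Variables (R : realType) (n : nat).

Definition enorm (v : 'rV[R]_n) : R := Num.sqrt (\sum_(i < n) (v 0 i) ^+ 2).

Definition cball (x0 : 'rV[R]_n) (r : R) : set 'rV[R]_n :=
  [set x | enorm (x - x0) <= r].

(* Vertex matrix: row j is (x^(j)_1, ..., x^(j)_n, 1). *)
Definition vertex_mx (xs : 'I_(n + 1) -> 'rV[R]_n) : 'M[R]_(n + 1) :=
  row_mx (\matrix_(j < n + 1) xs j) (const_mx 1).

(* l_{ij}, i = 1..n : coefficient of x_i in lambda_j *)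
Definition lcoef (xs : 'I_(n + 1) -> 'rV[R]_n) (i : 'I_n) (j : 'I_(n + 1)) : R :=
  invmx (vertex_mx xs) (lshift 1 i) j.

(* l_{n+1,j} : constant term of lambda_j *)
Definition lconst (xs : 'I_(n + 1) -> 'rV[R]_n) (j : 'I_(n + 1)) : R :=
  invmx (vertex_mx xs) (rshift n (0 : 'I_1)) j.

Definition lambda (xs : 'I_(n + 1) -> 'rV[R]_n) (j : 'I_(n + 1)) (x : 'rV[R]_n) : R :=
  \sum_(i < n) lcoef xs i j * x 0 i + lconst xs j.

Definition interp (xs : 'I_(n + 1) -> 'rV[R]_n) (f : 'rV[R]_n -> R) (x : 'rV[R]_n) : R :=
  \sum_(j < n + 1) f (xs j) * lambda xs j x.

Definition supnorm (B : set 'rV[R]_n) (g : 'rV[R]_n -> R) : R :=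
  sup [set `|g x| | x in B].

Definition interp_norm (B : set 'rV[R]_n) (xs : 'I_(n + 1) -> 'rV[R]_n) : R :=
  sup [set supnorm B (interp xs f) | f in
        [set f : 'rV[R]_n -> R | {within B, continuous f} /\
                                 forall x, B x -> `|f x| <= 1]].

End Defs.

(* Main.v *)
Set Warnings "-all".
Require Import Defs.
From HB Require Import structures.
From mathcomp Require Import all_boot all_order all_algebra.
From mathcomp Require Import all_classical all_reals all_analysis.
From mathcomp Require Import ring lra.
Import Order.TTheory GRing.Theory Num.Theory.
Import numFieldNormedType.Exports.
Local Open Scope classical_set_scope.
Local Open Scope ring_scope.

Lemma lambda_sum (R : realType) (n : nat) (xs : 'I_(n + 1) -> 'rV[R]_n)
  (w : 'I_(n + 1) -> R) (y : 'rV[R]_n) :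
  \sum_j w j * lambda xs j y =
  \sum_i (\sum_j w j * lcoef xs i j) * y 0 i + \sum_j w j * lconst xs j.
Proof.
rewrite /lambda; under eq_bigr do rewrite mulrDr mulr_sumr.
rewrite big_split /= exchange_big; congr (_ + _).
by apply: eq_bigr => i _; rewrite mulr_suml; apply: eq_bigr => j _; rewrite mulrA.
Qed.

Lemma lambda_nodes (R : realType) (n : nat) (xs : 'I_(n + 1) -> 'rV[R]_n)
  (hnd : vertex_mx xs \in unitmx) j k :
  lambda xs j (xs k) = (k == j)%:R.
Proof.
have := congr1 (fun M : 'M[R]_(n + 1) => M k j) (mulmxV hnd).
rewrite mxE !mxE big_split_ord /= big_ord1 => <-.
rewrite /lambda /lcoef /lconst /vertex_mx; congr (_ + _).
  by apply: eq_bigr => i _; rewrite row_mxEl mxE mulrC.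
by rewrite row_mxEr mxE mul1r.
Qed.

Lemma cauchy_schwarz (R : realType) m (a v : 'I_m -> R) :
  \sum_i a i * v i <= Num.sqrt (\sum_i a i ^+ 2) * Num.sqrt (\sum_i v i ^+ 2).
Proof.
set A := \sum_i a i ^+ 2; set V := \sum_i v i ^+ 2; set S := \sum_i a i * v i.
have A0 : 0 <= A by apply: sumr_ge0 => i _; exact: sqr_ge0.
have V0 : 0 <= V by apply: sumr_ge0 => i _; exact: sqr_ge0.
suff SAV : S ^+ 2 <= A * V.
  rewrite -sqrtrM // (le_trans (ler_norm S)) //.
  by rewrite -sqrtr_sqr ler_sqrt ?mulr_ge0.
have [V0e|Vn0] := eqVneq V 0.
  have v0 : forall i, v i = 0.
    move=> i; apply/eqP; rewrite -sqrf_eq0; apply/eqP.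
    by apply: (psumr_eq0P (P := xpredT) (F := fun i => v i ^+ 2)) => // j _; exact: sqr_ge0.
  rewrite V0e mulr0.
  by rewrite /S big1 ?expr0n ?mulr0 // => i _; rewrite v0 mulr0.
have Vp : 0 < V by rewrite lt_def Vn0 V0.
have H : 0 <= \sum_i (a i * V - v i * S) ^+ 2 by apply: sumr_ge0 => i _; exact: sqr_ge0.
have E : \sum_i (a i * V - v i * S) ^+ 2 = V * (A * V - S ^+ 2).
  rewrite (eq_bigr (fun i => a i ^+ 2 * V ^+ 2 - (a i * v i) * (2 * V * S) + v i ^+ 2 * S ^+ 2)); last first.
    by move=> i _; ring.
  rewrite big_split sumrB /= -!mulr_suml -/A -/S -/V; ring.
rewrite E in H; rewrite -subr_ge0; by rewrite pmulr_rge0 in H.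
Qed.
Lemma continuous_entry (R : realType) m n (i : 'I_m) (j : 'I_n) :
  continuous (fun u : 'M[R]_(m, n) => u i j).
Proof.
move=> u A /nbhs_ballP[e /= e0 eA].
apply/nbhs_ballP; exists e => //= v [_ uv]; exact: eA (uv i j).
Qed.

Lemma continuous_sum (R : realType) (T : topologicalType) m (F : 'I_m -> T -> R) :
  (forall k, continuous (F k)) -> continuous (fun z => \sum_(k < m) F k z).
Proof.
elim: m F => [|m IH] F cF.
  under eq_fun do rewrite big_ord0; exact: cst_continuous.
under eq_fun do rewrite big_ord_recr /=.
move=> z; apply: (@continuousD _ _ _ (fun z => \sum_(i < m) F (widen_ord (leqnSn m) i) z) (F ord_max)).
  by apply: IH => k; exact: cF.
exact: cF.
Qed.

Lemma continuous_lambda (R : realType) (n : nat) (xs : 'I_(n + 1) -> 'rV[R]_n) j :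
  continuous (lambda xs j).
Proof.
rewrite /lambda => z.
have h1 : continuous (fun z : 'rV[R]_n => \sum_(i < n) lcoef xs i j * z 0 i).
  apply: (@continuous_sum R _ n (fun i (z : 'rV[R]_n) => lcoef xs i j * z 0 i)) => i y.
  have g1 : continuous (fun z : 'rV[R]_n => lcoef xs i j) by exact: cst_continuous.
  have g2 : continuous (fun z : 'rV[R]_n => z 0 i) by exact: continuous_entry.
  exact: (continuousM (g1 y) (g2 y)).
have h2 : continuous (fun z : 'rV[R]_n => lconst xs j) by exact: cst_continuous.
exact: (continuousD (h1 z) (h2 z)).
Qed.
Lemma clamp_pm1 (R : realType) (u : R) : u = 1 \/ u = -1 -> (`|u + 1| - `|u - 1|) / 2 = u.
Proof.
case=> ->.
  by rewrite subrr normr0 subr0 ger0_norm //; field.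
have -> : (-1 : R) + 1 = 0 by ring.
have -> : (-1 : R) - 1 = - 2 by ring.
by rewrite normr0 sub0r normrN ger0_norm //; field.
Qed.
Lemma clamp_le1 (R : realType) (u : R) : `|(`|u + 1| - `|u - 1|) / 2| <= 1.
Proof.
have := ler_dist_dist (u + 1) (u - 1).
have -> : u + 1 - (u - 1) = 2 by ring.
rewrite normrM normfV (ger0_norm (_ : 0 <= 2)) //.
set D := `| _ - _|; lra.
Qed.
Lemma continuous_clamp (T : topologicalType) (R : realType) (g : T -> R) :
  continuous g -> continuous (fun z => (`|g z + 1| - `|g z - 1|) / 2).
Proof.
move=> cg z.
have a1 : continuous (fun z => `|g z + 1|).
  move=> y; have h := continuousD (cg y) (@cst_continuous _ _ (1:R) y).
  have h2 := continuous_comp h (@norm_continuous _ R^o _). exact: h2.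
have a2 : continuous (fun z => `|g z - 1|).
  move=> y; have h := continuousB (cg y) (@cst_continuous _ _ (1:R) y).
  have h2 := continuous_comp h (@norm_continuous _ R^o _). exact: h2.
exact: (continuousM (continuousB (a1 z) (a2 z)) (@cst_continuous _ _ (2^-1 : R) z)).
Qed.

Theorem theorem11p1 (R : realType) (n : nat) (x0 : 'rV[R]_n) (r : R)
    (xs : 'I_(n + 1) -> 'rV[R]_n)
    (hxs : forall j, cball x0 r (xs j))
    (hnd : vertex_mx xs \in unitmx) :
  interp_norm (cball x0 r) xs =
    \big[Num.max/0]_(s : {ffun 'I_(n + 1) -> bool})
      (r * Num.sqrt (\sum_(i < n)
             (\sum_(j < n + 1) (-1) ^+ s j * lcoef xs i j) ^+ 2)
       + `| \sum_(j < n + 1) (-1) ^+ s j * lambda xs j x0 |)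
  /\
  ((n + 1)%:R^-1 *: \sum_(j < n + 1) xs j = x0 ->
   interp_norm (cball x0 r) xs =
    \big[Num.max/0]_(s : {ffun 'I_(n + 1) -> bool})
      (r * Num.sqrt (\sum_(i < n)
             (\sum_(j < n + 1) (-1) ^+ s j * lcoef xs i j) ^+ 2)
       + (n + 1)%:R^-1 * `| \sum_(j < n + 1) (-1) ^+ s j |)).
Proof.
set B := cball x0 r.
set M := \big[Num.max/0]_(s : {ffun 'I_(n + 1) -> bool}) _.
have h01 : (0 < n + 1)%N by rewrite addn1.
pose j0 := Ordinal h01.
have r0 : 0 <= r by apply: le_trans (hxs j0); exact: sqrtr_ge0.
have dist_le : forall y, B y -> forall c : 'I_n -> R,
    \sum_i c i * (y 0 i - x0 0 i) <= Num.sqrt (\sum_i c i ^+ 2) * r.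
  move=> y By c; have := @cauchy_schwarz R n c (fun i => y 0 i - x0 0 i) => /= /le_trans; apply.
  apply: ler_wpM2l; first exact: sqrtr_ge0.
  move: By; rewrite /B /cball /enorm /=.
  by under eq_bigr do rewrite !mxE.
have diff : forall (w : 'I_(n + 1) -> R) y,
    \sum_j w j * lambda xs j y = \sum_j w j * lambda xs j x0
      + \sum_i (\sum_j w j * lcoef xs i j) * (y 0 i - x0 0 i).
  move=> w y; rewrite !lambda_sum.
  have -> : \sum_i (\sum_j w j * lcoef xs i j) * (y 0 i - x0 0 i) =
     \sum_i (\sum_j w j * lcoef xs i j) * y 0 i - \sum_i (\sum_j w j * lcoef xs i j) * x0 0 i.
    by rewrite -sumrB; apply: eq_bigr => i _; rewrite mulrBr.
  ring.
have LleM : forall y, B y -> \sum_j `|lambda xs j y| <= M.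
  move=> y By.
  pose s := [ffun j => lambda xs j y < 0].
  have -> : \sum_j `|lambda xs j y| = \sum_j (-1) ^+ s j * lambda xs j y.
    apply: eq_bigr => j _; rewrite /s ffunE.
    have [h|h] := ltP (lambda xs j y) 0.
      by rewrite /= expr1 mulN1r ltr0_norm.
    by rewrite /= expr0 mul1r ger0_norm.
  rewrite diff; apply: le_trans (le_bigmax _ _ s).
  rewrite addrC; apply: lerD; last exact: ler_norm.
  by rewrite mulrC; exact: dist_le.
have Pbound : forall f y, (forall x, B x -> `|f x| <= 1) ->
    `|interp xs f y| <= \sum_j `|lambda xs j y|.
  move=> f y hf; rewrite /interp; apply: le_trans (ler_norm_sum _ _ _) _.
  apply: ler_sum => j _; rewrite normrM -[X in _ <= X]mul1r.
  by apply: ler_wpM2r; [exact: normr_ge0 | exact: hf (hxs j)].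
have supM : forall f, (forall x, B x -> `|f x| <= 1) -> supnorm B (interp xs f) <= M.
  move=> f hf; apply: ge_sup.
    by exists `|interp xs f (xs j0)|; exists (xs j0) => //; exact: hxs.
  move=> _ [y By <-]; apply: le_trans (Pbound _ _ hf) (LleM _ By).
have upper : interp_norm B xs <= M.
  apply: ge_sup.
    exists (supnorm B (interp xs (fun=> 0))); exists (fun=> 0) => //; split.
      exact: continuous_subspaceT (@cst_continuous _ _ (0:R)).
    by move=> x _; rewrite normr0.
  by move=> _ [f [_ hf] <-]; exact: supM.
have LleN : forall y, B y -> \sum_j `|lambda xs j y| <= interp_norm B xs.
  move=> y By.
  pose t (j : 'I_(n + 1)) : R := (-1) ^+ nat_of_bool (lambda xs j y < 0).
  pose g z := \sum_j t j * lambda xs j z.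
  pose f z := (`|g z + 1| - `|g z - 1|) / 2.
  have cg : continuous g.
    apply: (@continuous_sum R _ (n + 1) (fun j z => t j * lambda xs j z)) => j z.
    have c1 : continuous (fun _ : 'rV[R]_n => t j) by exact: cst_continuous.
    have c2 := @continuous_lambda R n xs j.
    exact: (continuousM (c1 z) (c2 z)).
  have cf : continuous f by exact: continuous_clamp.
  have hf : forall x, B x -> `|f x| <= 1 by move=> x _; exact: clamp_le1.
  have fx : forall k, f (xs k) = t k.
    move=> k; rewrite /f.
    have -> : g (xs k) = t k.
      rewrite /g; under eq_bigr do rewrite (@lambda_nodes R n xs hnd).
      rewrite (bigD1 k) //= eqxx mulr1 big1 ?addr0 // => j /negbTE.
      by rewrite eq_sym => ->; rewrite mulr0.
    apply: clamp_pm1; rewrite /t; case: (_ < 0); [right; exact: expr1 | left; exact: expr0].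
  have tl : forall j, t j * lambda xs j y = `|lambda xs j y|.
    move=> j; rewrite /t; have [h|h] := ltP (lambda xs j y) 0.
      by rewrite /= expr1 mulN1r ltr0_norm.
    by rewrite /= expr0 mul1r ger0_norm.
  have -> : \sum_j `|lambda xs j y| = interp xs f y.
    by rewrite /interp; apply: eq_bigr => j _; rewrite fx tl.
  apply: le_trans (ler_norm _) _.
  apply: (@le_trans _ _ (supnorm B (interp xs f))).
    apply: ub_le_sup; last by exists y.
    exists M; move=> _ [z Bz <-]; exact: le_trans (Pbound _ _ hf) (LleM _ Bz).
  apply: ub_le_sup; last first.
    exists f => //; split => //; exact: continuous_subspaceT.
  by exists M => _ [h [_ hh] <-]; exact: supM.
have lower : forall s : {ffun 'I_(n + 1) -> bool},
    r * Num.sqrt (\sum_(i < n)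
             (\sum_(j < n + 1) (-1) ^+ s j * lcoef xs i j) ^+ 2)
       + `| \sum_(j < n + 1) (-1) ^+ s j * lambda xs j x0 | <= interp_norm B xs.
  move=> s.
  pose w (j : 'I_(n + 1)) : R := (-1) ^+ s j.
  pose a (i : 'I_n) := \sum_(j < n + 1) w j * lcoef xs i j.
  pose A := \sum_(i < n) a i ^+ 2.
  pose b := \sum_(j < n + 1) w j * lambda xs j x0.
  have A0 : 0 <= A by apply: sumr_ge0 => i _; exact: sqr_ge0.
  pose eps : R := if b < 0 then -1 else 1.
  have epsb : eps * b = `|b|.
    rewrite /eps; case: ifP => h; first by rewrite mulN1r ltr0_norm.
    by rewrite mul1r ger0_norm // leNgt h.
  have eps2 : eps * eps = 1 by rewrite /eps; case: ifP => _; rewrite ?mulrNN mulr1.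
  have neps : `|eps| = 1 by rewrite /eps; case: ifP => _; rewrite ?normrN normr1.
  pose c := eps * (r / Num.sqrt A).
  pose y := x0 + c *: \row_i a i.
  have yi : forall i, y 0 i - x0 0 i = c * a i.
    by move=> i; rewrite !mxE addrC addKr.
  have crA : (r / Num.sqrt A) * Num.sqrt A <= r.
    have [->|nz] := eqVneq (Num.sqrt A) 0; first by rewrite mulr0.
    by rewrite divfK.
  have By : B y.
    rewrite /B /cball /enorm /=.
    have E : forall i, (y - x0) 0 i = c * a i by move=> i; rewrite !mxE addrC addKr.
    under eq_bigr do rewrite E exprMn.
    rewrite -mulr_sumr -/A sqrtrM ?sqr_ge0 // sqrtr_sqr normrM neps mul1r.
    by rewrite ger0_norm ?divr_ge0 ?sqrtr_ge0.
  have key : \sum_j (eps * w j) * lambda xs j y =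
      r * Num.sqrt A + `|b|.
    under eq_bigr do rewrite -mulrA.
    rewrite -mulr_sumr diff -/b.
    under eq_bigr do rewrite yi.
    have -> : \sum_i (\sum_j w j * lcoef xs i j) * (c * a i) = c * A.
      by rewrite /A mulr_sumr; apply: eq_bigr => i _; rewrite -/(a i); ring.
    rewrite mulrDr epsb addrC; congr (_ + _).
    have -> : eps * (c * A) = (eps * eps) * ((r / Num.sqrt A) * A) by rewrite /c; ring.
    rewrite eps2 mul1r.
    have [z|nz] := eqVneq (Num.sqrt A) 0; first by rewrite z invr0 !mulr0 mul0r.
    by rewrite -{2}(sqr_sqrtr A0) expr2 mulrA divfK.
  rewrite -/w -/a -/A -/b -key.

  have LN := LleN y By.
  refine (le_trans _ LN).
  apply: le_trans (ler_norm _) _.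
  apply: le_trans (ler_norm_sum _ _ _) _; apply: ler_sum => j _.
  by rewrite !normrM neps /w normrX normrN1 expr1n !mul1r.
have main : interp_norm B xs = M.
  apply: le_anti; rewrite upper /=.
  apply: bigmax_le; last by move=> s _; exact: lower.
  apply: le_trans (LleN _ (hxs j0)); apply: sumr_ge0 => j _; exact: normr_ge0.
split; first exact: main.
move=> hc.
have n1 : (n + 1)%:R != 0 :> R by rewrite pnatr_eq0 addn1.
have lamx0 : forall j, lambda xs j x0 = (n + 1)%:R^-1.
  move=> j.
  have S1 : \sum_l lambda xs j (xs l) = 1.
    under eq_bigr do rewrite (@lambda_nodes R n xs hnd).
    rewrite (bigD1 j) //= eqxx big1 ?addr0 // => l /negbTE ->; done.
  have S2 : \sum_l lambda xs j (xs l) =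
      \sum_i lcoef xs i j * \sum_l xs l 0 i + (n + 1)%:R * lconst xs j.
    rewrite /lambda big_split /= exchange_big sumr_const card_ord mulr_natl.
    by congr (_ + _); apply: eq_bigr => i _; rewrite mulr_sumr.
  rewrite -hc /lambda.
  under eq_bigr do rewrite !mxE summxE.
  rewrite (eq_bigr (fun i => (n + 1)%:R^-1 * (lcoef xs i j * \sum_l xs l 0 i))); last first.
    by move=> i _; rewrite mulrCA.
  rewrite -mulr_sumr.
  have -> : lconst xs j = (n + 1)%:R^-1 * ((n + 1)%:R * lconst xs j).
    by rewrite mulrA mulVf ?mul1r.
  by rewrite -mulrDr -S2 S1 mulr1.
rewrite main /M; apply: eq_bigr => s _; congr (_ + _).
under eq_bigr do rewrite lamx0.
rewrite -mulr_suml normrM mulrC ger0_norm // invr_ge0 ler0n //.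
Qed.
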